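(* Let $k\geq 0$ and $p\geq 1$ be integers with $\log_e^{(k)}p\geq 1$, and let $f_k(p)$ be the minimum of $\mathrm{Tran}(T)$ over all $(k,p)$-trees $T$. Then $f_k(p)^{1/p}\leq 10\,\log_e^{(k)}p$.
   Context: A $(k,p)$-tree is a rooted plane tree (children of each node ordered left to right) with exactly $p$ leaves, in which every leaf is at distance exactly $k+1$ from the root (nodes at distance $i$ from the root are at level $i$, so leaves are at level $k+1$). For a rooted tree $T$, $\mathrm{Tran}(T)=\prod_{u\in V(T)}|r_u|!$, where $|r_u|$ is the number of children of $u$. $\log_e^{(k)}p$ is the $k$-fold iterated natural logarithm, $\log_e^{(0)}p=p$. *)

(* Defs.v *)
From Stdlib Require Import Reals List Arith.

Inductive tree : Type := Node : list tree -> tree.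

Definition children (t : tree) : list tree := match t with Node cs => cs end.

Fixpoint nleaves (t : tree) : nat :=
  match t with
  | Node nil => 1
  | Node cs =>
      (fix sumL (l : list tree) : nat :=
         match l with nil => 0 | c :: l' => (nleaves c + sumL l')%nat end) cs
  end.

Fixpoint tran (t : tree) : nat :=
  match t with
  | Node cs =>
      (fact (length cs) *
       (fix prodL (l : list tree) : nat :=
          match l with nil => 1 | c :: l' => (tran c * prodL l')%nat end) cs)%nat
  end.

Fixpoint leaves_at_depth (d : nat) (t : tree) : Prop :=
  match t with
  | Node cs =>
      match d with
      | O => cs = nil
      | S d' => cs <> nil /\
          (fix allL (l : list tree) : Prop :=
             match l with nil => True | c :: l' => leaves_at_depth d' c /\ allL l' end) cs
      end
  end.

Definition kp_tree (k p : nat) (t : tree) : Prop :=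
  nleaves t = p /\ leaves_at_depth (S k) t.

Definition is_fk (k p m : nat) : Prop :=
  (exists t, kp_tree k p t /\ tran t = m) /\
  (forall t, kp_tree k p t -> (m <= tran t)%nat).

Open Scope R_scope.

Definition iter_ln (k : nat) (x : R) : R := Nat.iter k ln x.

(* Main.v *)
Require Import Defs.
From Stdlib Require Import Reals List Arith.
Open Scope R_scope.
From Stdlib Require Import Reals List Arith Lia.

Fixpoint sumL (l : list tree) : nat :=
  match l with nil => 0 | c :: l' => (nleaves c + sumL l')%nat end.
Fixpoint prodL (l : list tree) : nat :=
  match l with nil => 1 | c :: l' => (tran c * prodL l')%nat end.
Definition allL (d : nat) : list tree -> Prop :=
  fix allL (l : list tree) : Prop :=
  match l with nil => True | c :: l' => leaves_at_depth d c /\ allL l' end.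

Lemma nleaves_node ts : ts <> nil -> nleaves (Node ts) = sumL ts.
Proof. destruct ts as [|c l]; [congruence|]. intros _. reflexivity. Qed.

Lemma tran_node ts : tran (Node ts) = (fact (length ts) * prodL ts)%nat.
Proof. reflexivity. Qed.

Lemma lad_node d ts : leaves_at_depth (S d) (Node ts) <-> (ts <> nil /\ allL d ts).
Proof. reflexivity. Qed.

Definition prodfact (cs : list nat) : nat := fold_right (fun c acc => (fact c * acc)%nat) 1%nat cs.

Lemma tree_ind' (P : tree -> Prop) :
  (forall ts, Forall P ts -> P (Node ts)) -> forall t, P t.
Proof.
  intros H. fix IH 1. intros [ts]. apply H.
  induction ts as [|c ts IHts]; constructor; [apply IH | exact IHts].
Qed.

Lemma prodfact_app a b : prodfact (a ++ b) = (prodfact a * prodfact b)%nat.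
Proof. induction a; simpl; [lia|]. rewrite IHa. lia. Qed.

Lemma list_sum_app' a b : list_sum (a ++ b) = (list_sum a + list_sum b)%nat.
Proof. induction a; simpl; lia. Qed.

Definition leaf := Node nil.

Lemma sumL_repeat c : sumL (repeat leaf c) = c.
Proof. induction c; simpl; [reflexivity|]. rewrite IHc. reflexivity. Qed.
Lemma prodL_repeat c : prodL (repeat leaf c) = 1%nat.
Proof. induction c; simpl; [reflexivity|]. rewrite IHc. reflexivity. Qed.
Lemma allL_repeat c : allL 0 (repeat leaf c).
Proof. induction c; simpl; auto. Qed.

Lemma expand_list (ts : list tree) :
  Forall (fun t => forall d cs, leaves_at_depth d t -> length cs = nleaves t ->
     Forall (fun c => 1 <= c)%nat cs ->
     exists t', leaves_at_depth (S d) t' /\ nleaves t' = list_sum cs /\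
                tran t' = (tran t * prodfact cs)%nat) ts ->
  forall d cs, allL d ts -> length cs = sumL ts -> Forall (fun c => 1 <= c)%nat cs ->
  exists ts', length ts' = length ts /\ allL (S d) ts' /\ sumL ts' = list_sum cs /\
              prodL ts' = (prodL ts * prodfact cs)%nat.
Proof.
  induction ts as [|t ts IH]; intros HF d cs Hall Hlen Hpos.
  - destruct cs; simpl in Hlen; [|discriminate]. exists nil. simpl. repeat split; auto.
  - inversion HF as [|? ? Ht HF']; subst. simpl in Hall. destruct Hall as [Hd Hall].
    simpl in Hlen.
    assert (Hl1 : length (firstn (nleaves t) cs) = nleaves t).
    { rewrite length_firstn. lia. }
    assert (Hl2 : length (skipn (nleaves t) cs) = sumL ts).
    { rewrite length_skipn. lia. }
    rewrite <- (firstn_skipn (nleaves t) cs) in Hpos.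
    apply Forall_app in Hpos. destruct Hpos as [Hp1 Hp2].
    destruct (Ht d _ Hd Hl1 Hp1) as [t' [H1 [H2 H3]]].
    destruct (IH HF' d _ Hall Hl2 Hp2) as [ts' [H4 [H5 [H6 H7]]]].
    exists (t' :: ts'). simpl. repeat split; auto.
    + rewrite H2, H6, <- list_sum_app', firstn_skipn. reflexivity.
    + rewrite H3, H7. rewrite <- (firstn_skipn (nleaves t) cs) at 3.
      rewrite prodfact_app. lia.
Qed.

Lemma expand t : forall d cs, leaves_at_depth d t -> length cs = nleaves t ->
     Forall (fun c => 1 <= c)%nat cs ->
     exists t', leaves_at_depth (S d) t' /\ nleaves t' = list_sum cs /\
                tran t' = (tran t * prodfact cs)%nat.
Proof.
  induction t as [ts IH] using tree_ind'.
  intros [|d] cs Hd Hlen Hpos.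
  - simpl in Hd. subst ts. simpl in Hlen.
    destruct cs as [|c [|c' cs]]; simpl in Hlen; try discriminate.
    inversion Hpos; subst.
    exists (Node (repeat leaf c)). split; [|split].
    + apply lad_node. split.
      * destruct c; [lia|]. simpl. discriminate.
      * apply allL_repeat.
    + rewrite nleaves_node. rewrite sumL_repeat. simpl. lia.
      destruct c; [lia|]. simpl. discriminate.
    + rewrite tran_node, prodL_repeat, repeat_length. simpl. lia.
  - apply lad_node in Hd. destruct Hd as [Hne Hall].
    rewrite nleaves_node in Hlen by exact Hne.
    destruct (expand_list ts IH d cs Hall Hlen Hpos) as [ts' [H1 [H2 [H3 H4]]]].
    exists (Node ts'). split; [|split].
    + apply lad_node. split; auto. intro E; subst. destruct ts; simpl in H1; congruence.
    + rewrite nleaves_node; auto. intro E; subst. destruct ts; simpl in H1; congruence.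
    + rewrite !tran_node, H1, H4. lia.
Qed.
Lemma leaf_lad : leaves_at_depth 0 leaf.
Proof. reflexivity. Qed.

Lemma kp_base (p : nat) : (1 <= p)%nat -> exists t, kp_tree 0 p t /\ tran t = fact p.
Proof.
  intros Hp. destruct (expand leaf 0 (p :: nil) leaf_lad eq_refl) as [t [H1 [H2 H3]]].
  - constructor; auto.
  - exists t. split. split; auto. simpl in H2. lia. rewrite H3. simpl. lia.
Qed.

Lemma prodfact_repeat c n : prodfact (repeat c n) = (fact c ^ n)%nat.
Proof. induction n; simpl; auto. Qed.
Lemma list_sum_repeat c n : list_sum (repeat c n) = (c * n)%nat.
Proof. induction n; simpl; auto. rewrite IHn. lia. Qed.
Lemma Forall_repeat' (P : nat -> Prop) c n : P c -> Forall P (repeat c n).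
Proof. intros H; induction n; simpl; constructor; auto. Qed.

Lemma kp_lift k p t : kp_tree k p t -> exists t', kp_tree (S k) p t' /\ tran t' = tran t.
Proof.
  intros [H1 H2].
  destruct (expand t (S k) (repeat 1%nat p) H2) as [t' [A [B C]]].
  - rewrite repeat_length; auto.
  - apply Forall_repeat'; lia.
  - exists t'. split. split; auto. rewrite B, list_sum_repeat. lia.
    rewrite C, prodfact_repeat. simpl. try rewrite Nat.pow_1_l. lia.
Qed.

Lemma kp_distr k p q t : (1 <= q)%nat -> (q <= p)%nat -> kp_tree k q t ->
  exists t', kp_tree (S k) p t' /\
   tran t' = (tran t * fact (p / q + 1) ^ (p mod q) * fact (p / q) ^ (q - p mod q))%nat.
Proof.
  intros Hq Hqp [H1 H2].
  set (a := (p / q)%nat). set (r := (p mod q)%nat).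
  assert (Ha : (1 <= a)%nat). { unfold a. apply Nat.div_le_lower_bound; lia. }
  assert (Hr : (r < q)%nat). { unfold r. apply Nat.mod_upper_bound. lia. }
  assert (Hdm : p = (q * a + r)%nat). { unfold a, r. apply Nat.div_mod. lia. }
  destruct (expand t (S k) (repeat (a+1)%nat r ++ repeat a (q - r)) H2) as [t' [A [B C]]].
  - rewrite length_app, !repeat_length. lia.
  - apply Forall_app; split; apply Forall_repeat'; lia.
  - exists t'. split. split; auto.
    + rewrite B, list_sum_app', !list_sum_repeat. nia.
    + rewrite C, prodfact_app, !prodfact_repeat. lia.
Qed.
From Coquelicot Require Import Coquelicot.
From Stdlib Require Import Reals Lra Lia List Arith.
Open Scope R_scope.

Lemma ln_le_sub1 x : 0 < x -> ln x <= x - 1.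
Proof.
  intros Hx. pose proof (exp_ineq1_le (ln x)). rewrite exp_ln in H by exact Hx. lra.
Qed.

Lemma ln_lb2 x : 1 <= x -> 2*(x-1)/(x+1) <= ln x.
Proof.
intros Hx.
destruct (Req_dec x 1) as [->|Hne]. { rewrite ln_1. lra. }
set (f := fun t => ln t - 2*(t-1)/(t+1)).
assert (D: forall t, 0 < t -> is_derive f t (/t - 4/((t+1)^2))).
{ intros t Ht. unfold f. auto_derive. repeat split; lra. field. lra. }
destruct (MVT_gen f 1 x (fun t => /t - 4/((t+1)^2))) as [c [Hc Heq]].
- intros t Ht. apply D. rewrite Rmin_left in Ht by lra. lra.
- intros t Ht. rewrite Rmin_left in Ht by lra. apply continuity_pt_filterlim.
  apply (ex_derive_continuous f). eexists. apply D. lra.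
- rewrite Rmin_left in Hc by lra. rewrite Rmax_right in Hc by lra.
  unfold f in Heq. rewrite ln_1 in Heq.
  assert (0 <= /c - 4/((c+1)^2)).
  { replace (/c - 4/((c+1)^2)) with ((c-1)^2/(c*(c+1)^2)) by (field; lra).
    apply Rdiv_le_0_compat. nra. apply Rmult_lt_0_compat; nra. }
  assert (0 <= (/c - 4/((c+1)^2))*(x-1)) by nra.
  assert (2*(1-1)/(1+1) = 0) by field. lra.
Qed.

Lemma stirling n : (1 <= n)%nat ->
  ln (INR (fact n)) <= INR n * ln (INR n) - INR n + 1 + ln (INR n) / 2.
Proof.
  intros Hn. induction n as [|n IH]; [lia|].
  destruct (Nat.eq_dec n 0) as [->|Hn0].
  { change (INR (fact 1)) with 1. change (INR 1) with 1. rewrite ln_1. lra. }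
  specialize (IH ltac:(lia)).
  assert (Hpos : 1 <= INR n). { apply (le_INR 1). lia. }
  rewrite fact_simpl, mult_INR, ln_mult.
  2: { apply lt_0_INR; lia. }
  2: { apply lt_0_INR, lt_O_fact. }
  rewrite S_INR.
  set (m := INR n) in *.
  assert (E : ln (m + 1) - ln m = ln ((m + 1) / m)).
  { unfold Rdiv. rewrite ln_mult by (try apply Rinv_0_lt_compat; lra).
    rewrite ln_Rinv by lra. ring. }
  assert (Hx : 1 <= (m + 1) / m).
  { replace ((m + 1) / m) with (1 + / m) by (field; lra).
    assert (0 < / m) by (apply Rinv_0_lt_compat; lra). lra. }
  pose proof (ln_lb2 _ Hx) as Hl.
  replace (2 * ((m + 1) / m - 1) / ((m + 1) / m + 1)) with (2 / (2 * m + 1)) in Hl by (field; lra).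
  rewrite <- E in Hl.
  assert (H2 : (m + /2) * (2 / (2 * m + 1)) = 1) by (field; lra).
  assert (H3 : 1 <= (m + /2) * (ln (m + 1) - ln m)).
  { apply Rle_trans with ((m + /2) * (2 / (2 * m + 1))); [lra|]. apply Rmult_le_compat_l; lra. }
  nra.
Qed.

Lemma ln_fact_le n : (1 <= n)%nat -> ln (INR (fact n)) <= INR n * ln (INR n).
Proof.
  intros Hn. pose proof (stirling n Hn).
  assert (1 <= INR n) by (apply (le_INR 1); lia).
  pose proof (ln_le_sub1 (INR n) ltac:(lra)). lra.
Qed.

Lemma sq_lb a s a' : 0 <= a -> a <= exp s -> a' <= a*a -> a' <= exp (2*s).
Proof. intros. replace (2*s) with (s+s) by ring. rewrite exp_plus. nra. Qed.
Lemma sq_ub b s b' : exp s <= b -> b*b <= b' -> exp (2*s) <= b'.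
Proof. intros. replace (2*s) with (s+s) by ring. rewrite exp_plus.
  pose proof (exp_pos s). nra. Qed.

Lemma exp_ub_inv s : 0 <= s < 1 -> exp s <= 1/(1-s).
Proof.
  intros Hs. pose proof (exp_ineq1_le (-s)).
  assert (exp s * exp (-s) = 1) by (rewrite <- exp_plus; replace (s + - s) with 0 by ring; apply exp_0).
  pose proof (exp_pos s). apply (Rmult_le_reg_r (1-s)); [lra|].
  unfold Rdiv. rewrite Rmult_1_l, Rinv_l by lra. nra.
Qed.

Lemma e_lb : 2.7129 <= exp 1.
Proof.
  assert (H0 : 1.00390625 <= exp (1/256)) by (pose proof (exp_ineq1_le (1/256)); lra).
  assert (H1 : 1.00782775 <= exp (1/128)).
  { replace (1/128) with (2*(1/256)) by lra. eapply sq_lb; [|exact H0|]; lra. }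
  assert (H2 : 1.01571677 <= exp (1/64)).
  { replace (1/64) with (2*(1/128)) by lra. eapply sq_lb; [|exact H1|]; lra. }
  assert (H3 : 1.03168055 <= exp (1/32)).
  { replace (1/32) with (2*(1/64)) by lra. eapply sq_lb; [|exact H2|]; lra. }
  assert (H4 : 1.06436475 <= exp (1/16)).
  { replace (1/16) with (2*(1/32)) by lra. eapply sq_lb; [|exact H3|]; lra. }
  assert (H5 : 1.13287232 <= exp (1/8)).
  { replace (1/8) with (2*(1/16)) by lra. eapply sq_lb; [|exact H4|]; lra. }
  assert (H6 : 1.28339969 <= exp (1/4)).
  { replace (1/4) with (2*(1/8)) by lra. eapply sq_lb; [|exact H5|]; lra. }
  assert (H7 : 1.64711476 <= exp (1/2)).
  { replace (1/2) with (2*(1/4)) by lra. eapply sq_lb; [|exact H6|]; lra. }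
  replace 1 with (2*(1/2)) by lra. eapply sq_lb; [|exact H7|]; lra.
Qed.

Lemma e_ub : exp 1 <= 2.7237.
Proof.
  assert (H0 : exp (1/256) <= 1.00392157).
  { eapply Rle_trans. apply exp_ub_inv. lra. apply (Rmult_le_reg_r (1 - 1/256)); [lra|].
    unfold Rdiv. rewrite Rmult_1_l, Rinv_l by lra. lra. }
  assert (H1 : exp (1/128) <= 1.00785852).
  { replace (1/128) with (2*(1/256)) by lra. eapply sq_ub; [exact H0|]; lra. }
  assert (H2 : exp (1/64) <= 1.0157788).
  { replace (1/64) with (2*(1/128)) by lra. eapply sq_ub; [exact H1|]; lra. }
  assert (H3 : exp (1/32) <= 1.03180658).
  { replace (1/32) with (2*(1/64)) by lra. eapply sq_ub; [exact H2|]; lra. }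
  assert (H4 : exp (1/16) <= 1.06462482).
  { replace (1/16) with (2*(1/32)) by lra. eapply sq_ub; [exact H3|]; lra. }
  assert (H5 : exp (1/8) <= 1.13342601).
  { replace (1/8) with (2*(1/16)) by lra. eapply sq_ub; [exact H4|]; lra. }
  assert (H6 : exp (1/4) <= 1.28465453).
  { replace (1/4) with (2*(1/8)) by lra. eapply sq_ub; [exact H5|]; lra. }
  assert (H7 : exp (1/2) <= 1.65033727).
  { replace (1/2) with (2*(1/4)) by lra. eapply sq_ub; [exact H6|]; lra. }
  replace 1 with (2*(1/2)) by lra. eapply sq_ub; [exact H7|]; lra.
Qed.
Lemma iter_ln_S k x : iter_ln (S k) x = ln (iter_ln k x).
Proof. reflexivity. Qed.

Lemma ln_nonpos v : v <= 0 -> ln v = 0.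
Proof. intros H. unfold ln. destruct (Rlt_dec 0 v) as [h|h]; [exfalso; lra|reflexivity]. Qed.

Lemma ln_ge1_pos v : 1 <= ln v -> 0 < v.
Proof. intros H. destruct (Rlt_dec 0 v); auto. rewrite ln_nonpos in H; lra. Qed.

Lemma ln_ge1 v : 1 <= ln v -> exp 1 <= v /\ v = exp (ln v).
Proof.
  intros H. pose proof (ln_ge1_pos v H). rewrite exp_ln by auto. split; [|reflexivity].
  rewrite <- (exp_ln v) by auto. destruct (Req_dec (ln v) 1) as [E|E].
  rewrite E. lra. left. apply exp_increasing. lra.
Qed.

Lemma e_ge1 : 1 <= exp 1.
Proof. pose proof e_lb. lra. Qed.

Lemma iter_ln_chain k x : 1 <= iter_ln k x ->
  forall j, (j <= k)%nat -> iter_ln k x <= iter_ln j x.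
Proof.
  induction k as [|k IH]; intros H j Hj.
  - assert (j = 0%nat) by lia. subst. lra.
  - destruct (Nat.eq_dec j (S k)) as [->|Hne]; [lra|].
    rewrite iter_ln_S in H |- *. pose proof (ln_ge1 _ H) as [He _].
    pose proof e_lb.
    assert (Hk1 : 1 <= iter_ln k x) by lra.
    pose proof (ln_le_sub1 (iter_ln k x) ltac:(lra)).
    specialize (IH Hk1 j ltac:(lia)). lra.
Qed.

Lemma ln_sub_lb a d : 0 <= d -> 1 <= a - d -> ln a - d <= ln (a - d).
Proof.
  intros Hd Had.
  assert (E : ln a - ln (a - d) = ln (a / (a - d))).
  { unfold Rdiv. rewrite ln_mult by (try apply Rinv_0_lt_compat; lra).
    rewrite ln_Rinv by lra. ring. }
  pose proof (ln_le_sub1 (a / (a - d))) as H.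
  assert (0 < a / (a - d)) by (apply Rdiv_lt_0_compat; lra).
  specialize (H H0).
  replace (a / (a - d) - 1) with (d / (a - d)) in H by (field; lra).
  assert (d / (a - d) <= d).
  { apply Rmult_le_reg_r with (a - d); [lra|]. unfold Rdiv.
    rewrite Rmult_assoc, Rinv_l by lra. nra. }
  lra.
Qed.

Lemma iter_ln_compare k (p q y : R) :
  1 <= y -> 0 < q -> q <= p -> p / y <= q ->
  (forall j, (1 <= j <= k)%nat -> 1 + ln y <= iter_ln j p) ->
  forall j, (1 <= j <= k)%nat ->
    iter_ln j p - ln y <= iter_ln j q /\ iter_ln j q <= iter_ln j p.
Proof.
  intros Hy Hq Hqp Hpq Hbig j Hj.
  assert (Hly : 0 <= ln y) by (rewrite <- ln_1; apply ln_le; lra).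
  induction j as [|j IH]; [lia|].
  destruct (Nat.eq_dec j 0) as [->|Hj0].
  - simpl. assert (0 < p) by lra. split.
    + assert (ln (p / y) = ln p - ln y).
      { unfold Rdiv. rewrite ln_mult by (try apply Rinv_0_lt_compat; lra). rewrite ln_Rinv by lra. ring. }
      rewrite <- H0. apply ln_le; auto. apply Rdiv_lt_0_compat; lra.
    + apply ln_le; lra.
  - specialize (IH ltac:(lia)). destruct IH as [IH1 IH2].
    pose proof (Hbig j ltac:(lia)) as Hb.
    rewrite !iter_ln_S. split.
    + eapply Rle_trans. apply ln_sub_lb; [lra|lra]. apply ln_le; lra.
    + apply ln_le; lra.
Qed.

Lemma iter_ln_le_self k x : 1 <= iter_ln k x -> iter_ln k x <= x.
Proof. intros H. apply (iter_ln_chain k x H 0). lia. Qed.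
Lemma ceil_exists x : 0 <= x -> exists q : nat, x <= INR q < x + 1.
Proof.
  intros Hx. destruct (INR_unbounded x) as [N HN].
  assert (forall N, x <= INR N -> exists q : nat, x <= INR q < x + 1) as G.
  { induction N0 as [|N0 IH]; intros H.
    - exists 0%nat. simpl in *. lra.
    - destruct (Rle_dec x (INR N0)) as [h|h]; [apply IH, h|].
      exists (S N0). rewrite S_INR in *. lra. }
  apply (G N). lra.
Qed.

Lemma tran_pos t : (1 <= tran t)%nat.
Proof.
  induction t as [ts IH] using tree_ind'.
  rewrite tran_node. assert (1 <= prodL ts)%nat.
  { induction ts as [|c l IHl]; simpl; [lia|]. inversion IH; subst.
    specialize (IHl H2). nia. }
  pose proof (lt_O_fact (length ts)). nia.
Qed.

Lemma INR_pos_of n : (1 <= n)%nat -> 1 <= INR n.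
Proof. intros. apply (le_INR 1). lia. Qed.

(* cost of distributing p leaves evenly among q nodes *)
Lemma leafcost (p q : nat) (y : R) : (1 <= q)%nat -> (q <= p)%nat -> INR p / INR q <= y ->
  ln (INR (fact (p / q + 1) ^ (p mod q) * fact (p / q) ^ (q - p mod q)))
  <= INR p * ln y - INR p + 2 * INR q + INR q / 2 * ln (y + 1).
Proof.
  intros Hq Hqp Hy.
  set (a := (p / q)%nat). set (r := (p mod q)%nat).
  assert (Ha : (1 <= a)%nat). { unfold a. apply Nat.div_le_lower_bound; lia. }
  assert (Hr : (r < q)%nat). { unfold r. apply Nat.mod_upper_bound. lia. }
  assert (Hdm : p = (q * a + r)%nat). { unfold a, r. apply Nat.div_mod. lia. }
  assert (HqR : 1 <= INR q) by (apply INR_pos_of; auto).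
  assert (HaR : 1 <= INR a) by (apply INR_pos_of; auto).
  assert (HpR : INR p = INR q * INR a + INR r) by (rewrite Hdm, plus_INR, mult_INR; reflexivity).
  assert (HrR : INR r + 1 <= INR q) by (rewrite <- S_INR; apply le_INR; lia).
  assert (Hr0 : 0 <= INR r) by apply pos_INR.
  assert (Hqr : INR (q - r) = INR q - INR r) by (apply minus_INR; lia).
  set (u := INR p / INR q + 1).
  assert (Hau : INR a + 1 <= u).
  { unfold u. apply Rplus_le_compat_r. apply (Rmult_le_reg_r (INR q)); [lra|].
    unfold Rdiv. rewrite Rmult_assoc, Rinv_l by lra. nra. }
  assert (Hlnu1 : 0 <= ln u) by (rewrite <- ln_1; apply ln_le; lra).
  assert (Hfa : ln (INR (fact a)) <= INR a * ln u - INR a + 1 + ln u / 2).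
  { pose proof (stirling a Ha). assert (ln (INR a) <= ln u) by (apply ln_le; lra).
    assert (INR a * ln (INR a) <= INR a * ln u) by (apply Rmult_le_compat_l; lra). lra. }
  assert (Hfa1 : ln (INR (fact (a+1))) <= (INR a + 1) * ln u - (INR a + 1) + 1 + ln u / 2).
  { pose proof (stirling (a+1) ltac:(lia)). rewrite plus_INR in H. simpl (INR 1) in H.
    assert (ln (INR a + 1) <= ln u) by (apply ln_le; lra).
    assert ((INR a + 1) * ln (INR a + 1) <= (INR a + 1) * ln u) by (apply Rmult_le_compat_l; lra). lra. }
  assert (Hf0 : forall n, 0 < INR (fact n)) by (intros; apply lt_0_INR, lt_O_fact).
  rewrite mult_INR, !pow_INR, ln_mult by (apply pow_lt; auto).
  rewrite !ln_pow by auto. rewrite Hqr.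
  assert (Hsum : INR r * ln (INR (fact (a + 1))) + (INR q - INR r) * ln (INR (fact a))
     <= INR p * (ln u - 1) + INR q + INR q / 2 * ln u).
  { assert (INR r * ln (INR (fact (a + 1))) <= INR r * ((INR a + 1) * ln u - (INR a + 1) + 1 + ln u / 2))
      by (apply Rmult_le_compat_l; lra).
    assert ((INR q - INR r) * ln (INR (fact a)) <= (INR q - INR r) * (INR a * ln u - INR a + 1 + ln u / 2))
      by (apply Rmult_le_compat_l; lra).
    rewrite HpR. nra. }
  assert (HpR1 : 1 <= INR p) by (apply INR_pos_of; lia).
  assert (Hw : 0 < INR p / INR q) by (apply Rdiv_lt_0_compat; lra).
  assert (Hlnu : ln u <= ln y + INR q / INR p).
  { assert (E : ln u - ln (INR p / INR q) = ln (u / (INR p / INR q))).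
    { rewrite (ln_div u (INR p / INR q)); [ring| unfold u; lra | lra]. }
    pose proof (ln_le_sub1 (u / (INR p / INR q))) as H1.
    assert (H2 : u / (INR p / INR q) - 1 = INR q / INR p) by (unfold u; field; lra).
    assert (0 < u / (INR p / INR q)) by (apply Rdiv_lt_0_compat; unfold u; lra).
    specialize (H1 H). rewrite H2 in H1.
    assert (ln (INR p / INR q) <= ln y) by (apply ln_le; lra). lra. }
  assert (Hlnu2 : ln u <= ln (y + 1)) by (apply ln_le; unfold u; lra).
  assert (INR p * ln u <= INR p * ln y + INR q).
  { replace (INR p * ln y + INR q) with (INR p * (ln y + INR q / INR p)) by (field; lra).
    apply Rmult_le_compat_l; lra. }
  assert (INR q / 2 * ln u <= INR q / 2 * ln (y + 1)) by (apply Rmult_le_compat_l; lra).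
  lra.
Qed.
Definition Claim (b : R -> R) (k : nat) : Prop :=
  forall p : nat, (1 <= p)%nat -> 1 <= iter_ln k (INR p) ->
  exists t, kp_tree k p t /\
    ln (INR (tran t)) <= INR p * (ln (iter_ln k (INR p)) + b (iter_ln k (INR p))).

Definition k1A (b : R -> R) (y : R) : Prop := y <= ln y + b y.
Definition k1B (b : R -> R) (y : R) : Prop :=
  (exp y / y + 1) * (ln (exp y / y + 1) + 1 + ln (y + 1) / 2) + 1 + ln (exp y / y + 1) / 2
    <= exp y * (1 + b y).
Definition stepA (b : R -> R) (y : R) : Prop := y + b (exp y) <= ln y + b y.
Definition stepB (b : R -> R) (y : R) : Prop :=
  forall z P, exp y - ln y <= z -> exp (exp y) <= P ->
    (b z + 2 + ln (y + 1) / 2) / y + (y + (b z + 2 + ln (y + 1) / 2)) / P <= b y.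

Lemma claim0 b : (forall y, 0 <= b y) -> Claim b 0.
Proof.
  intros Hb p Hp _. destruct (kp_base p Hp) as [t [Ht Et]]. exists t. split; auto.
  rewrite Et. simpl iter_ln. pose proof (ln_fact_le p Hp). pose proof (Hb (INR p)).
  assert (1 <= INR p) by (apply INR_pos_of; auto).
  assert (0 <= INR p * b (INR p)) by (apply Rmult_le_pos; lra). nra.
Qed.

Lemma ln_tran_mult (a c : nat) : (1 <= a)%nat -> (1 <= c)%nat ->
  ln (INR (a * c)) = ln (INR a) + ln (INR c).
Proof.
  intros. rewrite mult_INR, ln_mult; auto; apply lt_0_INR; lia.
Qed.

Lemma leafpart_pos (p q : nat) :
  (1 <= fact (p / q + 1) ^ (p mod q) * fact (p / q) ^ (q - p mod q))%nat.
Proof.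
  pose proof (lt_O_fact (p / q + 1)). pose proof (lt_O_fact (p / q)).
  assert (fact (p / q + 1) ^ (p mod q) <> 0)%nat by (apply Nat.pow_nonzero; lia).
  assert (fact (p / q) ^ (q - p mod q) <> 0)%nat by (apply Nat.pow_nonzero; lia).
  nia.
Qed.

Lemma choose_q (p : nat) (y : R) : (1 <= p)%nat -> 1 <= y ->
  exists q : nat, (1 <= q)%nat /\ (q <= p)%nat /\ INR p / y <= INR q /\ INR q <= INR p / y + 1.
Proof.
  intros Hp Hy. assert (HpR : 1 <= INR p) by (apply INR_pos_of; auto).
  assert (Hx : 0 < INR p / y) by (apply Rdiv_lt_0_compat; lra).
  destruct (ceil_exists (INR p / y)) as [q [H1 H2]]; [lra|].
  assert (INR p / y <= INR p).
  { apply (Rmult_le_reg_r y); [lra|]. unfold Rdiv. rewrite Rmult_assoc, Rinv_l by lra. nra. }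
  exists q. repeat split; try lra.
  - destruct q; [simpl in H1; lra | lia].
  - assert (INR q < INR (p + 1)) by (rewrite plus_INR; simpl; lra).
    apply INR_lt in H0. lia.
Qed.

Lemma claim1 b : (forall y, 0 <= b y) -> (forall y, 1 <= y -> k1A b y \/ k1B b y) -> Claim b 1.
Proof.
  intros Hb Hc p Hp Hy. change (iter_ln 1 (INR p)) with (ln (INR p)) in *.
  set (y := ln (INR p)) in *.
  assert (HpR : 1 <= INR p) by (apply INR_pos_of; auto).
  assert (Epy : INR p = exp y) by (unfold y; rewrite exp_ln; lra).
  destruct (Hc y Hy) as [HA|HB].
  - destruct (kp_base p Hp) as [t0 [Ht0 Et0]]. destruct (kp_lift _ _ _ Ht0) as [t [Ht Et]].
    exists t. split; auto. rewrite Et, Et0. pose proof (ln_fact_le p Hp). fold y in H.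
    unfold k1A in HA. apply Rle_trans with (INR p * y); [lra|]. apply Rmult_le_compat_l; lra.
  - destruct (choose_q p y Hp Hy) as [q [Hq1 [Hqp [Hq2 Hq3]]]].
    destruct (kp_base q Hq1) as [t0 [Ht0 Et0]].
    destruct (kp_distr 0 p q t0 Hq1 Hqp Ht0) as [t [Ht Et]].
    exists t. split; auto. rewrite Et, Et0, <- Nat.mul_assoc.
    rewrite ln_tran_mult by (apply leafpart_pos || apply lt_O_fact).
    assert (HqR : 1 <= INR q) by (apply INR_pos_of; auto).
    assert (Hpq : INR p / INR q <= y).
    { apply (Rmult_le_reg_r (INR q)); [lra|]. unfold Rdiv. rewrite Rmult_assoc, Rinv_l by lra.
      apply (Rmult_le_reg_r (/ y)). apply Rinv_0_lt_compat; lra.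
      rewrite Rmult_1_r. replace (y * INR q * / y) with (INR q) by (field; lra). exact Hq2. }
    pose proof (leafcost p q y Hq1 Hqp Hpq) as HL.
    pose proof (stirling q Hq1) as HS.
    unfold k1B in HB. rewrite <- Epy in HB.
    set (Q := INR p / y + 1) in *.
    assert (Hlq : ln (INR q) <= ln Q) by (apply ln_le; lra).
    assert (Hlq0 : 0 <= ln (INR q)) by (rewrite <- ln_1; apply ln_le; lra).
    assert (Hly : 0 <= ln (y + 1)) by (rewrite <- ln_1; apply ln_le; lra).
    assert (H1 : INR q * ln (INR q) <= Q * ln Q).
    { apply Rle_trans with (INR q * ln Q). apply Rmult_le_compat_l; lra.
      apply Rmult_le_compat_r; lra. }
    assert (H2 : INR q * (1 + ln (y + 1) / 2) <= Q * (1 + ln (y + 1) / 2))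
      by (apply Rmult_le_compat_r; lra).
    assert (H3 : 0 <= INR p * b y) by (apply Rmult_le_pos; [lra| apply Hb]).
    nra.
Qed.
Lemma claimS b k : (1 <= k)%nat -> (forall y, 0 <= b y) ->
  (forall y, 1 <= y -> stepA b y \/ stepB b y) -> Claim b k -> Claim b (S k).
Proof.
  intros Hk Hb Hc IH p Hp Hy. rewrite iter_ln_S in *.
  set (L := iter_ln k (INR p)) in *.
  set (y := ln L) in *.
  destruct (ln_ge1 L Hy) as [HLe HLy]. fold y in HLy.
  pose proof e_lb as He.
  assert (HL1 : 1 <= L) by lra.
  assert (HpR : 1 <= INR p) by (apply INR_pos_of; auto).
  destruct (Hc y Hy) as [HA|HB].
  - destruct (IH p Hp HL1) as [t0 [Ht0 E0]]. fold L in E0.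
    destruct (kp_lift _ _ _ Ht0) as [t [Ht Et]]. exists t. split; auto. rewrite Et.
    unfold stepA in HA. rewrite <- HLy in HA. fold y in E0.
    apply Rle_trans with (1 := E0). apply Rmult_le_compat_l; lra.
  - destruct (choose_q p y Hp Hy) as [q [Hq1 [Hqp [Hq2 Hq3]]]].
    assert (HqR : 1 <= INR q) by (apply INR_pos_of; auto).
    assert (Hexp : 1 + y <= exp y) by apply exp_ineq1_le.
    assert (Hly : ln y <= y - 1) by (apply ln_le_sub1; lra).
    assert (Hly0 : 0 <= ln y) by (rewrite <- ln_1; apply ln_le; lra).
    assert (Hbig : forall j, (1 <= j <= k)%nat -> 1 + ln y <= iter_ln j (INR p)).
    { intros j Hj. pose proof (iter_ln_chain k (INR p) HL1 j ltac:(lia)). fold L in H. lra. }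
    destruct (iter_ln_compare k (INR p) (INR q) y Hy ltac:(lra) ltac:(apply le_INR; auto) Hq2 Hbig k
      ltac:(lia)) as [Hz1 Hz2].
    fold L in Hz1, Hz2. set (z := iter_ln k (INR q)) in *.
    assert (Hz : 1 <= z) by lra.
    destruct (IH q Hq1 Hz) as [t0 [Ht0 E0]]. fold z in E0.
    destruct (kp_distr k p q t0 Hq1 Hqp Ht0) as [t [Ht Et]].
    exists t. split; auto. rewrite Et, <- Nat.mul_assoc.
    rewrite ln_tran_mult by (apply leafpart_pos || apply tran_pos).
    assert (Hpq : INR p / INR q <= y).
    { apply (Rmult_le_reg_r (INR q)); [lra|]. unfold Rdiv. rewrite Rmult_assoc, Rinv_l by lra.
      apply (Rmult_le_reg_r (/ y)). apply Rinv_0_lt_compat; lra.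
      rewrite Rmult_1_r. replace (y * INR q * / y) with (INR q) by (field; lra). exact Hq2. }
    pose proof (leafcost p q y Hq1 Hqp Hpq) as HLc.
    assert (Hlnz : ln z <= y) by (unfold y; apply ln_le; lra).
    assert (HP : exp (exp y) <= INR p).
    { destruct k as [|k']; [lia|].
      assert (HLdef : L = ln (iter_ln k' (INR p))) by reflexivity.
      set (M := iter_ln k' (INR p)) in *.
      assert (HM : 1 <= ln M) by lra.
      destruct (ln_ge1 M HM) as [HM1 HM2].
      pose proof (iter_ln_le_self k' (INR p) ltac:(fold M; lra)). fold M in H.
      rewrite <- HLdef, HLy in HM2. lra. }
    specialize (HB z (INR p) ltac:(lra) HP).
    set (R := b z + 2 + ln (y + 1) / 2) in *.
    assert (HR : 0 <= R).
    { unfold R. pose proof (Hb z). assert (0 <= ln (y + 1)) by (rewrite <- ln_1; apply ln_le; lra). lra. }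
    assert (HT0 : ln (INR (tran t0)) <= INR q * (y + b z)).
    { apply Rle_trans with (1 := E0). apply Rmult_le_compat_l; lra. }
    assert (Hqq : INR q * (y + R) <= (INR p / y + 1) * (y + R)) by (apply Rmult_le_compat_r; lra).
    assert (E2 : (INR p / y + 1) * (y + R) = INR p + INR p * (R / y) + (y + R)) by (field; lra).
    assert (E3 : INR p * (R / y + (y + R) / INR p) = INR p * (R / y) + (y + R)) by (field; lra).
    assert (H4 : INR p * (R / y + (y + R) / INR p) <= INR p * b y) by (apply Rmult_le_compat_l; lra).
    unfold R in *. nra.
Qed.
Lemma all_claims b : (forall y, 0 <= b y) ->
  (forall y, 1 <= y -> k1A b y \/ k1B b y) ->
  (forall y, 1 <= y -> stepA b y \/ stepB b y) -> forall k, Claim b k.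
Proof.
  intros H0 H1 H2 k. induction k as [|k IH].
  - apply claim0; auto.
  - destruct k as [|k]. apply claim1; auto. apply claimS; auto. lia.
Qed.

Lemma min_exists (P : nat -> Prop) : (exists n, P n) -> exists m, P m /\ forall n, P n -> (m <= n)%nat.
Proof.
  intros [n Hn]. revert Hn. induction n as [n IH] using (well_founded_induction lt_wf). intros Hn.
  destruct (Classical_Prop.classic (exists n', (n' < n)%nat /\ P n')) as [[n' [Hlt Hn']]|Hno].
  - exact (IH n' Hlt Hn').
  - exists n. split; auto. intros n'' Hn''. destruct (le_lt_dec n n''); auto.
    exfalso. apply Hno. exists n''. auto.
Qed.

Lemma exp_le_mono a c : a <= c -> exp a <= exp c.
Proof. intros [H|H]. left. apply exp_increasing, H. rewrite H. lra. Qed.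

Lemma exp_22 : exp 2.25 <= 10.
Proof.
  replace 2.25 with (1 + 1 + 0.25) by lra. rewrite !exp_plus.
  pose proof e_ub. pose proof (exp_ub_inv 0.25 ltac:(lra)). pose proof e_lb.
  pose proof (exp_pos 0.25).
  assert (exp 1 * exp 1 <= 2.7237 * 2.7237) by nra.
  assert (exp 0.25 <= 1.33334) by (eapply Rle_trans; [exact H0| lra]).
  nra.
Qed.

Lemma main_from_beta b : (forall y, 0 <= b y) -> (forall y, b y <= 2.25) ->
  (forall y, 1 <= y -> k1A b y \/ k1B b y) ->
  (forall y, 1 <= y -> stepA b y \/ stepB b y) ->
  forall (k p : nat) (hp : (1 <= p)%nat) (hlog : 1 <= iter_ln k (INR p)),
  exists m : nat, is_fk k p m /\
    Rpower (INR m) (1 / INR p) <= 10 * iter_ln k (INR p).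
Proof.
  intros H0 Hmax H1 H2 k p hp hlog.
  destruct (all_claims b H0 H1 H2 k p hp hlog) as [t [Ht Hb]].
  destruct (min_exists (fun n => exists t, kp_tree k p t /\ tran t = n)) as [m [[tm [Htm Em]] Hmin]].
  { exists (tran t). exists t. auto. }
  exists m. split.
  - split. exists tm. auto. intros t' Ht'. apply Hmin. exists t'. auto.
  - assert (Hmt : (m <= tran t)%nat) by (apply Hmin; exists t; auto).
    assert (Hm1 : (1 <= m)%nat) by (rewrite <- Em; apply tran_pos).
    set (L := iter_ln k (INR p)) in *.
    assert (HpR : 1 <= INR p) by (apply INR_pos_of; auto).
    assert (Hlm : ln (INR m) <= ln (INR (tran t))) by (apply ln_le; [apply lt_0_INR; lia| apply le_INR; auto]).
    unfold Rpower.
    assert (Hle : 1 / INR p * ln (INR m) <= ln L + b L).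
    { apply (Rmult_le_reg_l (INR p)); [lra|].
      replace (INR p * (1 / INR p * ln (INR m))) with (ln (INR m)) by (field; lra). lra. }
    apply Rle_trans with (exp (ln L + b L)). apply exp_le_mono; auto.
    rewrite exp_plus, exp_ln by lra.
    assert (exp (b L) <= 10) by (eapply Rle_trans; [apply exp_le_mono, Hmax| apply exp_22]).
    nra.
Qed.
Lemma exp_le_mono' a c : a <= c -> exp a <= exp c.
Proof. intros [H|H]. left. apply exp_increasing, H. rewrite H. lra. Qed.

Lemma ln_mono a c : 0 < a -> a <= c -> ln a <= ln c.
Proof. intros. apply ln_le; auto. Qed.

Lemma lnlb t L : 1 <= t -> L <= 2*(t-1)/(t+1) -> L <= ln t.
Proof. intros. pose proof (ln_lb2 t H). lra. Qed.

Lemma lnub t m a U : 0 < a -> a <= exp m -> 0 < t -> m - 1 + t / a <= U -> ln t <= U.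
Proof.
  intros Ha Ham Ht HU.
  pose proof (ln_le_sub1 (t / exp m) ltac:(apply Rdiv_lt_0_compat; [lra|apply exp_pos])) as H.
  rewrite ln_div in H by (try apply exp_pos; lra). rewrite ln_exp in H.
  assert (t / exp m <= t / a).
  { unfold Rdiv. apply Rmult_le_compat_l; [lra|]. apply Rinv_le_contravar; lra. }
  lra.
Qed.

Lemma explb x m a E : a <= exp m -> m <= x -> 0 <= a -> E <= a * (1 + (x - m)) -> E <= exp x.
Proof.
  intros Ha Hm Ha0 HE. replace x with (m + (x - m)) by ring. rewrite exp_plus.
  pose proof (exp_ineq1_le (x - m)). pose proof (exp_pos m).
  assert (a * (1 + (x - m)) <= exp m * exp (x - m)).
  { apply Rmult_le_compat; lra. }
  lra.
Qed.

Lemma exp0_ge : 1 <= exp 0. Proof. rewrite exp_0. lra. Qed.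
Lemma exp1_ge : 2.7129 <= exp 1. Proof. exact e_lb. Qed.
Lemma exp2_ge : 7.3598 <= exp 2.
Proof. replace 2 with (1+1) by lra. rewrite exp_plus. pose proof e_lb. nra. Qed.
Lemma exp3_ge : 19.966 <= exp 3.
Proof. replace 3 with (2+1) by lra. rewrite exp_plus. pose proof e_lb. pose proof exp2_ge. nra. Qed.
Lemma exp4_ge : 54.165 <= exp 4.
Proof. replace 4 with (3+1) by lra. rewrite exp_plus. pose proof e_lb. pose proof exp3_ge. nra. Qed.
Lemma exp5_ge : 146.94 <= exp 5.
Proof. replace 5 with (4+1) by lra. rewrite exp_plus. pose proof e_lb. pose proof exp4_ge. nra. Qed.

Section Generic.
Variable b : R -> R.

Lemma GA y lo hi Lmin E cE c : 0 < lo -> lo <= y <= hi -> Lmin <= ln lo -> E <= exp lo ->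
  (forall x, E <= x -> b x <= cE) -> b y = c -> hi - Lmin + cE <= c -> stepA b y.
Proof.
  intros Hlo Hy HL HE Hb Hc Hn. unfold stepA.
  assert (ln lo <= ln y) by (apply ln_mono; lra).
  assert (exp lo <= exp y) by (apply exp_le_mono'; lra).
  specialize (Hb (exp y) ltac:(lra)). lra.
Qed.

Lemma GA0 y lo hi Lmin c : 0 < lo -> lo <= y <= hi -> Lmin <= ln lo -> b y = c -> hi - Lmin <= c -> k1A b y.
Proof.
  intros Hlo Hy HL Hc Hn. unfold k1A.
  assert (ln lo <= ln y) by (apply ln_mono; lra). lra.
Qed.

Lemma GB y lo hi E U1 U2 Pmin cZ c : 1 <= lo -> lo <= y <= hi -> E <= exp lo -> ln hi <= U1 ->
  ln (hi + 1) <= U2 -> Pmin <= exp E -> 0 < Pmin ->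
  (forall x, E - U1 <= x -> b x <= cZ) -> (forall x, 0 <= b x) -> b y = c ->
  (cZ + 2 + U2 / 2) / lo + (hi + (cZ + 2 + U2 / 2)) / Pmin <= c -> stepB b y.
Proof.
  intros Hlo Hy HE HU1 HU2 HP HP0 HbZ Hb0 Hc Hn z P Hz HPz.
  assert (ln y <= ln hi) by (apply ln_mono; lra).
  assert (exp lo <= exp y) by (apply exp_le_mono'; lra).
  assert (Hbz : b z <= cZ) by (apply HbZ; lra).
  assert (ln (y + 1) <= ln (hi + 1)) by (apply ln_mono; lra).
  assert (exp E <= exp (exp y)) by (apply exp_le_mono'; lra).
  assert (Hl0 : 0 <= ln (y + 1)) by (rewrite <- ln_1; apply ln_mono; lra).
  pose proof (Hb0 z).
  set (R := b z + 2 + ln (y + 1) / 2). set (R' := cZ + 2 + U2 / 2).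
  assert (HR : 0 <= R <= R') by (unfold R, R'; lra).
  assert (R / y <= R' / lo).
  { unfold Rdiv. apply Rmult_le_compat; try lra.
    apply Rlt_le, Rinv_0_lt_compat; lra. apply Rinv_le_contravar; lra. }
  assert ((y + R) / P <= (hi + R') / Pmin).
  { unfold Rdiv. apply Rmult_le_compat; try lra.
    apply Rlt_le, Rinv_0_lt_compat; lra. apply Rinv_le_contravar; lra. }
  unfold R, R' in *. lra.
Qed.

Lemma k1B_suff y : 1 <= y ->
  (1 + ln (y + 1) / 2 - ln y) / y
   + / exp y * (3 + 1.5 * y + 1.5 * y * / exp y + ln (y + 1) / 2) <= b y -> k1B b y.
Proof.
  intros Hy H. unfold k1B.
  set (P := exp y) in *. set (e := / P).
  assert (HP : 1 + y <= P) by apply exp_ineq1_le.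
  assert (He : 0 < e) by (apply Rinv_0_lt_compat; lra).
  assert (HeP : e * P = 1) by (unfold e; field; lra).
  set (Q := P / y + 1).
  assert (HQ1 : 1 <= Q) by (unfold Q; assert (0 < P / y) by (apply Rdiv_lt_0_compat; lra); lra).
  set (L := ln y). set (M := ln (y + 1) / 2).
  assert (HL : 0 <= L) by (unfold L; rewrite <- ln_1; apply ln_mono; lra).
  assert (HM : 0 <= M) by (unfold M; assert (0 <= ln (y+1)) by (rewrite <- ln_1; apply ln_mono; lra); lra).
  assert (HG : ln Q <= y - L + y * e).
  { assert (E1 : Q = (P / y) * (1 + y * e)) by (unfold Q, e; field; lra).
    rewrite E1, ln_mult by (try apply Rdiv_lt_0_compat; nra).
    rewrite ln_div by lra. unfold P at 1. rewrite ln_exp.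
    pose proof (ln_le_sub1 (1 + y * e) ltac:(nra)). fold L. lra. }
  assert (HlQ : 0 <= ln Q) by (rewrite <- ln_1; apply ln_mono; lra).
  set (G := y - L + y * e) in *.
  assert (H1 : Q * (ln Q + 1 + M) <= Q * (G + 1 + M)) by (apply Rmult_le_compat_l; lra).
  assert (Hq : Q = P * (/ y + e)) by (unfold Q, e; field; lra).
  assert (H2 : Q * (G + 1 + M) + 1 + G / 2 =
     P * (1 + (1 + M - L) / y + e * (1 + y + y * e + 1 + M - L) + e * (1 + G / 2))).
  { rewrite Hq. unfold G. field_simplify; [|lra|lra]. unfold e. field. lra. }
  assert (H3 : e * (1 + y + y * e + 1 + M - L) + e * (1 + G / 2)
       <= e * (3 + 1.5 * y + 1.5 * y * e + M)).
  { unfold G. assert (0 <= e * L) by nra. assert (0 <= e * (L / 2)) by nra. nra. }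
  assert (H4 : P * (1 + (1 + M - L) / y + e * (1 + y + y * e + 1 + M - L) + e * (1 + G / 2))
       <= P * (1 + b y)).
  { apply Rmult_le_compat_l; [lra|]. fold M L in H. unfold e in H3 |- *. lra. }
  lra.
Qed.

Lemma GB1p y lo hi Lmin U2 E c : 1 <= lo -> lo <= y <= hi -> Lmin <= ln lo -> ln (hi + 1) <= U2 ->
  E <= exp lo -> 0 < E -> b y = c -> 0 <= 1 + U2 / 2 - Lmin ->
  (1 + U2 / 2 - Lmin) / lo + / E * (3 + 1.5 * hi + 1.5 * hi * / E + U2 / 2) <= c -> k1B b y.
Proof.
  intros Hlo Hy HL HU HE HE0 Hc HN Hn. apply k1B_suff; [lra|].
  assert (ln lo <= ln y) by (apply ln_mono; lra).
  assert (ln (y + 1) <= ln (hi + 1)) by (apply ln_mono; lra).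
  assert (exp lo <= exp y) by (apply exp_le_mono'; lra).
  assert (Hey : / exp y <= / E) by (apply Rinv_le_contravar; lra).
  assert (Hey0 : 0 < / exp y) by (apply Rinv_0_lt_compat, exp_pos).
  assert (Hl0 : 0 <= ln (y + 1)) by (rewrite <- ln_1; apply ln_mono; lra).
  assert ((1 + ln (y + 1) / 2 - ln y) / y <= (1 + U2 / 2 - Lmin) / lo).
  { destruct (Rle_dec 0 (1 + ln (y + 1) / 2 - ln y)).
    - unfold Rdiv. apply Rmult_le_compat; try lra.
      apply Rlt_le, Rinv_0_lt_compat; lra. apply Rinv_le_contravar; lra.
    - apply Rle_trans with 0. unfold Rdiv. assert (0 < / y) by (apply Rinv_0_lt_compat; lra). nra.
      unfold Rdiv. assert (0 < / lo) by (apply Rinv_0_lt_compat; lra). nra. }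
  assert (/ exp y * (3 + 1.5 * y + 1.5 * y * / exp y + ln (y + 1) / 2)
          <= / E * (3 + 1.5 * hi + 1.5 * hi * / E + U2 / 2)).
  { apply Rmult_le_compat; try lra.
    assert (0 <= y * / exp y) by nra. lra.
    assert (y * / exp y <= hi * / E) by (apply Rmult_le_compat; lra). lra. }
  lra.
Qed.

Lemma GB1n y lo hi Lmin U2 E c : 1 <= lo -> lo <= y <= hi -> Lmin <= ln lo -> ln (hi + 1) <= U2 ->
  E <= exp lo -> 0 < E -> b y = c -> 1 + U2 / 2 - Lmin <= 0 ->
  (1 + U2 / 2 - Lmin) / hi + / E * (3 + 1.5 * hi + 1.5 * hi * / E + U2 / 2) <= c -> k1B b y.
Proof.
  intros Hlo Hy HL HU HE HE0 Hc HN Hn. apply k1B_suff; [lra|].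
  assert (ln lo <= ln y) by (apply ln_mono; lra).
  assert (ln (y + 1) <= ln (hi + 1)) by (apply ln_mono; lra).
  assert (exp lo <= exp y) by (apply exp_le_mono'; lra).
  assert (Hey : / exp y <= / E) by (apply Rinv_le_contravar; lra).
  assert (Hey0 : 0 < / exp y) by (apply Rinv_0_lt_compat, exp_pos).
  assert (Hl0 : 0 <= ln (y + 1)) by (rewrite <- ln_1; apply ln_mono; lra).
  assert ((1 + ln (y + 1) / 2 - ln y) / y <= (1 + U2 / 2 - Lmin) / hi).
  { set (N := 1 + ln (y + 1) / 2 - ln y). set (N' := 1 + U2 / 2 - Lmin).
    assert (N <= N') by (unfold N, N'; lra).
    assert (/ hi <= / y) by (apply Rinv_le_contravar; lra).
    assert (0 < / hi) by (apply Rinv_0_lt_compat; lra).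
    assert (0 < / y) by (apply Rinv_0_lt_compat; lra).
    unfold Rdiv. apply Rle_trans with (N' * / y).
    apply Rmult_le_compat_r; lra. unfold N' in *. nra. }
  assert (/ exp y * (3 + 1.5 * y + 1.5 * y * / exp y + ln (y + 1) / 2)
          <= / E * (3 + 1.5 * hi + 1.5 * hi * / E + U2 / 2)).
  { apply Rmult_le_compat; try lra.
    assert (0 <= y * / exp y) by nra. lra.
    assert (y * / exp y <= hi * / E) by (apply Rmult_le_compat; lra). lra. }
  lra.
Qed.
End Generic.
Lemma exp_big y : 30 <= y -> 105 * y <= exp y.
Proof.
  intros Hy. set (w := y / 4).
  assert (E : exp y = exp w * exp w * exp w * exp w).
  { rewrite <- !exp_plus. f_equal. unfold w. field. }
  pose proof (exp_ineq1_le w).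
  assert (Hw : 7.5 <= w) by (unfold w; lra).
  assert (exp w * exp w >= w * w) by nra.
  assert (exp w * exp w * exp w * exp w >= w * w * (w * w)).
  { replace (exp w * exp w * exp w * exp w) with ((exp w * exp w) * (exp w * exp w)) by ring.
    apply Rle_ge, Rmult_le_compat; nra. }
  assert (w * w >= 56.25) by nra.
  assert (w * w * (w * w) >= 56.25 * (7.5 * w)) by nra.
  unfold w in *. lra.
Qed.

Lemma exp2_le : exp 2 <= 7.42.
Proof. replace 2 with (1+1) by lra. rewrite exp_plus. pose proof e_ub. pose proof (exp_pos 1). nra. Qed.

Section Tail.
Variable b : R -> R.

Lemma TailB y : 30 <= y -> (forall x, 30 <= x -> b x <= 0.2) -> (forall x, 0 <= b x) -> b y = 0.2 ->
  stepB b y.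
Proof.
  intros Hy HbT Hb0 Hc z P Hz HP.
  pose proof (exp_big y Hy) as Hey.
  assert (Hly : ln y <= y - 1) by (apply ln_le_sub1; lra).
  assert (Hbz : b z <= 0.2) by (apply HbT; lra).
  pose proof (Hb0 z).
  assert (Hexy : exp y <= exp (exp y)).
  { apply exp_le_mono'. pose proof (exp_ineq1_le y). lra. }
  assert (HU : ln (y + 1) <= 4 - 1 + (y + 1) / 54.165).
  { apply (lnub _ 4 54.165); try lra. apply exp4_ge. }
  assert (Hl0 : 0 <= ln (y + 1)) by (rewrite <- ln_1; apply ln_mono; lra).
  set (R := b z + 2 + ln (y + 1) / 2).
  assert (HR : 0 <= R <= 3.71 + y / 108) by (unfold R; lra).
  assert (H1 : R / y <= 3.71 / 30 + / 108).
  { apply (Rmult_le_reg_r y); [lra|]. unfold Rdiv. rewrite Rmult_assoc, Rinv_l by lra. nra. }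
  assert (H2 : (y + R) / P <= 1.2 / 105).
  { apply (Rmult_le_reg_r P); [lra|]. unfold Rdiv. rewrite Rmult_assoc, Rinv_l by lra. nra. }
  lra.
Qed.

Lemma TailB1 y : 30 <= y -> b y = 0.2 -> k1B b y.
Proof.
  intros Hy Hc. apply k1B_suff; [lra|].
  pose proof (exp_big y Hy) as Hey.
  assert (Hly : ln y <= y - 1) by (apply ln_le_sub1; lra).
  assert (HL0 : 0 <= ln y) by (rewrite <- ln_1; apply ln_mono; lra).
  assert (HN : ln (y + 1) <= 2 * ln y - 2).
  { assert (ln ((y + 1) * exp 2) <= ln (y * y)).
    { apply ln_mono. pose proof (exp_pos 2). nra. pose proof exp2_le. nra. }
    rewrite ln_mult, ln_exp, ln_mult in H by (try apply exp_pos; lra). lra. }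
  assert (Hl0 : 0 <= ln (y + 1)) by (rewrite <- ln_1; apply ln_mono; lra).
  assert (H1 : (1 + ln (y + 1) / 2 - ln y) / y <= 0).
  { unfold Rdiv. assert (0 < / y) by (apply Rinv_0_lt_compat; lra). nra. }
  set (e := / exp y).
  assert (He0 : 0 < e) by (apply Rinv_0_lt_compat, exp_pos).
  assert (Hee : e * exp y = 1) by (unfold e; field; apply Rgt_not_eq, exp_pos).
  assert (Hye : y * e <= / 105) by nra.
  assert (He : e <= / 3150) by nra.
  assert (e * (3 + 1.5 * y + 1.5 * y * e + ln (y + 1) / 2) <= 0.2).
  { assert (e * (ln (y + 1) / 2) <= e * y) by (apply Rmult_le_compat_l; lra).
    assert (e * (y * e) <= e) by nra. nra. }
  lra.
Qed.
End Tail.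
Definition beta (y : R) : R := (if Rle_lt_dec 30 y then 0.2 else (if Rle_lt_dec 20 y then 0.2 else (if Rle_lt_dec 15 y then 0.25 else (if Rle_lt_dec 10 y then 0.37 else (if Rle_lt_dec 8 y then 0.44 else (if Rle_lt_dec 6 y then 0.56 else (if Rle_lt_dec 5 y then 0.64 else (if Rle_lt_dec 4 y then 0.78 else (if Rle_lt_dec 3.5 y then 0.88 else (if Rle_lt_dec 3 y then 1.03 else (if Rle_lt_dec 2.7 y then 1.16 else (if Rle_lt_dec 2.5 y then 1.23 else (if Rle_lt_dec 2.25 y then 1.38 else (if Rle_lt_dec 2 y then 1.6 else (if Rle_lt_dec 1.75 y then 1.97 else (if Rle_lt_dec 1.6 y then 2.07 else (if Rle_lt_dec 1.5 y then 2.07 else (if Rle_lt_dec 1.4 y then 2.07 else (if Rle_lt_dec 1.3 y then 2.07 else (if Rle_lt_dec 1.2 y then 2.15 else (if Rle_lt_dec 1.15 y then 2.15 else (if Rle_lt_dec 1.1 y then 2.22 else (if Rle_lt_dec 1.05 y then 2.22 else 2.22))))))))))))))))))))))).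

Ltac bsolve := unfold beta; repeat match goal with |- context [Rle_lt_dec ?a ?b] => destruct (Rle_lt_dec a b) end; lra.

Lemma beta_nonneg : forall y, 0 <= beta y.
Proof. intros y. bsolve. Qed.
Lemma beta_max : forall y, beta y <= 2.25.
Proof. intros y. bsolve. Qed.

Lemma beta_step : forall y, 1 <= y -> stepA beta y \/ stepB beta y.
Proof.
  intros y Hy.
  destruct (Rle_lt_dec 30 y) as [Hc|Hc].
  { right. apply TailB; [lra| intros x Hx; bsolve | intros; bsolve | bsolve]. }
  destruct (Rle_lt_dec 20 y) as [Hl22|Hu22].
  { right. apply (GB beta y 20 30 2351.04 3.5026 3.5527 344874.05 0.2 0.2); [lra|lra|exact (explb 20 5 146.94 2351.04 exp5_ge ltac:(lra) ltac:(lra) ltac:(lra))|exact (lnub 30 3 19.966 3.5026 ltac:(lra) exp3_ge ltac:(lra) ltac:(lra))|exact (lnub (30 + 1) 3 19.966 3.5527 ltac:(lra) exp3_ge ltac:(lra) ltac:(lra))|exact (explb 2351.04 5 146.94 344874.05 exp5_ge ltac:(lra) ltac:(lra) ltac:(lra))|lra|intros x Hx; bsolve|intros; bsolve|bsolve|lra]. }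
  destruct (Rle_lt_dec 15 y) as [Hl21|Hu21].
  { right. apply (GB beta y 15 20 1616.34 3.0018 3.0518 236917.23 0.2 0.25); [lra|lra|exact (explb 15 5 146.94 1616.34 exp5_ge ltac:(lra) ltac:(lra) ltac:(lra))|exact (lnub 20 3 19.966 3.0018 ltac:(lra) exp3_ge ltac:(lra) ltac:(lra))|exact (lnub (20 + 1) 3 19.966 3.0518 ltac:(lra) exp3_ge ltac:(lra) ltac:(lra))|exact (explb 1616.34 5 146.94 236917.23 exp5_ge ltac:(lra) ltac:(lra) ltac:(lra))|lra|intros x Hx; bsolve|intros; bsolve|bsolve|lra]. }
  destruct (Rle_lt_dec 10 y) as [Hl20|Hu20].
  { right. apply (GB beta y 10 15 881.64 2.7513 2.8014 128960.42 0.2 0.37); [lra|lra|exact (explb 10 5 146.94 881.64 exp5_ge ltac:(lra) ltac:(lra) ltac:(lra))|exact (lnub 15 3 19.966 2.7513 ltac:(lra) exp3_ge ltac:(lra) ltac:(lra))|exact (lnub (15 + 1) 3 19.966 2.8014 ltac:(lra) exp3_ge ltac:(lra) ltac:(lra))|exact (explb 881.64 5 146.94 128960.42 exp5_ge ltac:(lra) ltac:(lra) ltac:(lra))|lra|intros x Hx; bsolve|intros; bsolve|bsolve|lra]. }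
  destruct (Rle_lt_dec 8 y) as [Hl19|Hu19].
  { right. apply (GB beta y 8 10 587.76 2.3588 2.4947 85777.69 0.2 0.44); [lra|lra|exact (explb 8 5 146.94 587.76 exp5_ge ltac:(lra) ltac:(lra) ltac:(lra))|exact (lnub 10 2 7.3598 2.3588 ltac:(lra) exp2_ge ltac:(lra) ltac:(lra))|exact (lnub (10 + 1) 2 7.3598 2.4947 ltac:(lra) exp2_ge ltac:(lra) ltac:(lra))|exact (explb 587.76 5 146.94 85777.69 exp5_ge ltac:(lra) ltac:(lra) ltac:(lra))|lra|intros x Hx; bsolve|intros; bsolve|bsolve|lra]. }
  destruct (Rle_lt_dec 6 y) as [Hl18|Hu18].
  { right. apply (GB beta y 6 8 293.88 2.087 2.2229 42594.96 0.2 0.56); [lra|lra|exact (explb 6 5 146.94 293.88 exp5_ge ltac:(lra) ltac:(lra) ltac:(lra))|exact (lnub 8 2 7.3598 2.087 ltac:(lra) exp2_ge ltac:(lra) ltac:(lra))|exact (lnub (8 + 1) 2 7.3598 2.2229 ltac:(lra) exp2_ge ltac:(lra) ltac:(lra))|exact (explb 293.88 5 146.94 42594.96 exp5_ge ltac:(lra) ltac:(lra) ltac:(lra))|lra|intros x Hx; bsolve|intros; bsolve|bsolve|lra]. }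
  destruct (Rle_lt_dec 5 y) as [Hl17|Hu17].
  { right. apply (GB beta y 5 6 146.94 1.8153 1.9512 21003.6 0.2 0.64); [lra|lra|exact (explb 5 5 146.94 146.94 exp5_ge ltac:(lra) ltac:(lra) ltac:(lra))|exact (lnub 6 2 7.3598 1.8153 ltac:(lra) exp2_ge ltac:(lra) ltac:(lra))|exact (lnub (6 + 1) 2 7.3598 1.9512 ltac:(lra) exp2_ge ltac:(lra) ltac:(lra))|exact (explb 146.94 5 146.94 21003.6 exp5_ge ltac:(lra) ltac:(lra) ltac:(lra))|lra|intros x Hx; bsolve|intros; bsolve|bsolve|lra]. }
  destruct (Rle_lt_dec 4 y) as [Hl16|Hu16].
  { right. apply (GB beta y 4 5 54.16 1.6794 1.8153 7370.51 0.2 0.78); [lra|lra|exact (explb 4 4 54.165 54.16 exp4_ge ltac:(lra) ltac:(lra) ltac:(lra))|exact (lnub 5 2 7.3598 1.6794 ltac:(lra) exp2_ge ltac:(lra) ltac:(lra))|exact (lnub (5 + 1) 2 7.3598 1.8153 ltac:(lra) exp2_ge ltac:(lra) ltac:(lra))|exact (explb 54.16 5 146.94 7370.51 exp5_ge ltac:(lra) ltac:(lra) ltac:(lra))|lra|intros x Hx; bsolve|intros; bsolve|bsolve|lra]. }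
  destruct (Rle_lt_dec 3.5 y) as [Hl15|Hu15].
  { right. apply (GB beta y 3.5 4 29.94 1.4745 1.6794 3811.62 0.2 0.88); [lra|lra|exact (explb 3.5 3 19.966 29.94 exp3_ge ltac:(lra) ltac:(lra) ltac:(lra))|exact (lnub 4 1 2.7129 1.4745 ltac:(lra) exp1_ge ltac:(lra) ltac:(lra))|exact (lnub (4 + 1) 2 7.3598 1.6794 ltac:(lra) exp2_ge ltac:(lra) ltac:(lra))|exact (explb 29.94 5 146.94 3811.62 exp5_ge ltac:(lra) ltac:(lra) ltac:(lra))|lra|intros x Hx; bsolve|intros; bsolve|bsolve|lra]. }
  destruct (Rle_lt_dec 3 y) as [Hl14|Hu14].
  { right. apply (GB beta y 3 3.5 19.96 1.2902 1.6115 2345.16 0.25 1.03); [lra|lra|exact (explb 3 3 19.966 19.96 exp3_ge ltac:(lra) ltac:(lra) ltac:(lra))|exact (lnub 3.5 1 2.7129 1.2902 ltac:(lra) exp1_ge ltac:(lra) ltac:(lra))|exact (lnub (3.5 + 1) 2 7.3598 1.6115 ltac:(lra) exp2_ge ltac:(lra) ltac:(lra))|exact (explb 19.96 5 146.94 2345.16 exp5_ge ltac:(lra) ltac:(lra) ltac:(lra))|lra|intros x Hx; bsolve|intros; bsolve|bsolve|lra]. }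
  destruct (Rle_lt_dec 2.7 y) as [Hl13|Hu13].
  { right. apply (GB beta y 2.7 3 12.51 1.1059 1.4745 1250.45 0.37 1.16); [lra|lra|exact (explb 2.7 2 7.3598 12.51 exp2_ge ltac:(lra) ltac:(lra) ltac:(lra))|exact (lnub 3 1 2.7129 1.1059 ltac:(lra) exp1_ge ltac:(lra) ltac:(lra))|exact (lnub (3 + 1) 1 2.7129 1.4745 ltac:(lra) exp1_ge ltac:(lra) ltac:(lra))|exact (explb 12.51 5 146.94 1250.45 exp5_ge ltac:(lra) ltac:(lra) ltac:(lra))|lra|intros x Hx; bsolve|intros; bsolve|bsolve|lra]. }
  destruct (Rle_lt_dec 2.5 y) as [Hl12|Hu12].
  { right. apply (GB beta y 2.5 2.7 11.03 0.9953 1.3639 1032.98 0.37 1.23); [lra|lra|exact (explb 2.5 2 7.3598 11.03 exp2_ge ltac:(lra) ltac:(lra) ltac:(lra))|exact (lnub 2.7 1 2.7129 0.9953 ltac:(lra) exp1_ge ltac:(lra) ltac:(lra))|exact (lnub (2.7 + 1) 1 2.7129 1.3639 ltac:(lra) exp1_ge ltac:(lra) ltac:(lra))|exact (explb 11.03 5 146.94 1032.98 exp5_ge ltac:(lra) ltac:(lra) ltac:(lra))|lra|intros x Hx; bsolve|intros; bsolve|bsolve|lra]. }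
  destruct (Rle_lt_dec 2.25 y) as [Hl11|Hu11].
  { right. apply (GB beta y 2.25 2.5 9.19 0.9216 1.2902 762.61 0.44 1.38); [lra|lra|exact (explb 2.25 2 7.3598 9.19 exp2_ge ltac:(lra) ltac:(lra) ltac:(lra))|exact (lnub 2.5 1 2.7129 0.9216 ltac:(lra) exp1_ge ltac:(lra) ltac:(lra))|exact (lnub (2.5 + 1) 1 2.7129 1.2902 ltac:(lra) exp1_ge ltac:(lra) ltac:(lra))|exact (explb 9.19 5 146.94 762.61 exp5_ge ltac:(lra) ltac:(lra) ltac:(lra))|lra|intros x Hx; bsolve|intros; bsolve|bsolve|lra]. }
  destruct (Rle_lt_dec 2 y) as [Hl10|Hu10].
  { right. apply (GB beta y 2 2.25 7.35 0.8294 1.198 492.24 0.56 1.6); [lra|lra|exact (explb 2 2 7.3598 7.35 exp2_ge ltac:(lra) ltac:(lra) ltac:(lra))|exact (lnub 2.25 1 2.7129 0.8294 ltac:(lra) exp1_ge ltac:(lra) ltac:(lra))|exact (lnub (2.25 + 1) 1 2.7129 1.198 ltac:(lra) exp1_ge ltac:(lra) ltac:(lra))|exact (explb 7.35 5 146.94 492.24 exp5_ge ltac:(lra) ltac:(lra) ltac:(lra))|lra|intros x Hx; bsolve|intros; bsolve|bsolve|lra]. }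
  destruct (Rle_lt_dec 1.75 y) as [Hl9|Hu9].
  { right. apply (GB beta y 1.75 2 4.74 0.7373 1.1059 94.24 0.78 1.97); [lra|lra|exact (explb 1.75 1 2.7129 4.74 exp1_ge ltac:(lra) ltac:(lra) ltac:(lra))|exact (lnub 2 1 2.7129 0.7373 ltac:(lra) exp1_ge ltac:(lra) ltac:(lra))|exact (lnub (2 + 1) 1 2.7129 1.1059 ltac:(lra) exp1_ge ltac:(lra) ltac:(lra))|exact (explb 4.74 4 54.165 94.24 exp4_ge ltac:(lra) ltac:(lra) ltac:(lra))|lra|intros x Hx; bsolve|intros; bsolve|bsolve|lra]. }
  destruct (Rle_lt_dec 1.6 y) as [Hl8|Hu8].
  { left. apply (GA beta y 1.6 1.75 0.4615 4.34 0.78 2.07); [lra|lra|exact (lnlb 1.6 0.4615 ltac:(lra) ltac:(lra))|exact (explb 1.6 1 2.7129 4.34 exp1_ge ltac:(lra) ltac:(lra) ltac:(lra))|intros x Hx; bsolve|bsolve|lra]. }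
  destruct (Rle_lt_dec 1.5 y) as [Hl7|Hu7].
  { left. apply (GA beta y 1.5 1.6 0.4 4.06 0.78 2.07); [lra|lra|exact (lnlb 1.5 0.4 ltac:(lra) ltac:(lra))|exact (explb 1.5 1 2.7129 4.06 exp1_ge ltac:(lra) ltac:(lra) ltac:(lra))|intros x Hx; bsolve|bsolve|lra]. }
  destruct (Rle_lt_dec 1.4 y) as [Hl6|Hu6].
  { left. apply (GA beta y 1.4 1.5 0.3333 3.79 0.88 2.07); [lra|lra|exact (lnlb 1.4 0.3333 ltac:(lra) ltac:(lra))|exact (explb 1.4 1 2.7129 3.79 exp1_ge ltac:(lra) ltac:(lra) ltac:(lra))|intros x Hx; bsolve|bsolve|lra]. }
  destruct (Rle_lt_dec 1.3 y) as [Hl5|Hu5].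
  { left. apply (GA beta y 1.3 1.4 0.2608 3.52 0.88 2.07); [lra|lra|exact (lnlb 1.3 0.2608 ltac:(lra) ltac:(lra))|exact (explb 1.3 1 2.7129 3.52 exp1_ge ltac:(lra) ltac:(lra) ltac:(lra))|intros x Hx; bsolve|bsolve|lra]. }
  destruct (Rle_lt_dec 1.2 y) as [Hl4|Hu4].
  { left. apply (GA beta y 1.2 1.3 0.1818 3.25 1.03 2.15); [lra|lra|exact (lnlb 1.2 0.1818 ltac:(lra) ltac:(lra))|exact (explb 1.2 1 2.7129 3.25 exp1_ge ltac:(lra) ltac:(lra) ltac:(lra))|intros x Hx; bsolve|bsolve|lra]. }
  destruct (Rle_lt_dec 1.15 y) as [Hl3|Hu3].
  { left. apply (GA beta y 1.15 1.2 0.1395 3.11 1.03 2.15); [lra|lra|exact (lnlb 1.15 0.1395 ltac:(lra) ltac:(lra))|exact (explb 1.15 1 2.7129 3.11 exp1_ge ltac:(lra) ltac:(lra) ltac:(lra))|intros x Hx; bsolve|bsolve|lra]. }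
  destruct (Rle_lt_dec 1.1 y) as [Hl2|Hu2].
  { left. apply (GA beta y 1.1 1.15 0.0952 2.98 1.16 2.22); [lra|lra|exact (lnlb 1.1 0.0952 ltac:(lra) ltac:(lra))|exact (explb 1.1 1 2.7129 2.98 exp1_ge ltac:(lra) ltac:(lra) ltac:(lra))|intros x Hx; bsolve|bsolve|lra]. }
  destruct (Rle_lt_dec 1.05 y) as [Hl1|Hu1].
  { left. apply (GA beta y 1.05 1.1 0.0487 2.84 1.16 2.22); [lra|lra|exact (lnlb 1.05 0.0487 ltac:(lra) ltac:(lra))|exact (explb 1.05 1 2.7129 2.84 exp1_ge ltac:(lra) ltac:(lra) ltac:(lra))|intros x Hx; bsolve|bsolve|lra]. }
  left. apply (GA beta y 1 1.05 0 2.71 1.16 2.22); [lra|lra|exact (lnlb 1 0 ltac:(lra) ltac:(lra))|exact (explb 1 1 2.7129 2.71 exp1_ge ltac:(lra) ltac:(lra) ltac:(lra))|intros x Hx; bsolve|bsolve|lra].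
Qed.

Lemma beta_k1 : forall y, 1 <= y -> k1A beta y \/ k1B beta y.
Proof.
  intros y Hy.
  destruct (Rle_lt_dec 30 y) as [Hc|Hc].
  { right. apply TailB1; [lra| bsolve]. }
  destruct (Rle_lt_dec 20 y) as [Hl22|Hu22].
  { right. apply (GB1p beta y 20 30 1.8095 3.5527 2351.04 0.2); [lra|lra|exact (lnlb 20 1.8095 ltac:(lra) ltac:(lra))|exact (lnub (30 + 1) 3 19.966 3.5527 ltac:(lra) exp3_ge ltac:(lra) ltac:(lra))|exact (explb 20 5 146.94 2351.04 exp5_ge ltac:(lra) ltac:(lra) ltac:(lra))|lra|bsolve|lra|lra]. }
  destruct (Rle_lt_dec 15 y) as [Hl21|Hu21].
  { right. apply (GB1p beta y 15 20 1.75 3.0518 1616.34 0.25); [lra|lra|exact (lnlb 15 1.75 ltac:(lra) ltac:(lra))|exact (lnub (20 + 1) 3 19.966 3.0518 ltac:(lra) exp3_ge ltac:(lra) ltac:(lra))|exact (explb 15 5 146.94 1616.34 exp5_ge ltac:(lra) ltac:(lra) ltac:(lra))|lra|bsolve|lra|lra]. }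
  destruct (Rle_lt_dec 10 y) as [Hl20|Hu20].
  { right. apply (GB1p beta y 10 15 1.6363 2.8014 881.64 0.37); [lra|lra|exact (lnlb 10 1.6363 ltac:(lra) ltac:(lra))|exact (lnub (15 + 1) 3 19.966 2.8014 ltac:(lra) exp3_ge ltac:(lra) ltac:(lra))|exact (explb 10 5 146.94 881.64 exp5_ge ltac:(lra) ltac:(lra) ltac:(lra))|lra|bsolve|lra|lra]. }
  destruct (Rle_lt_dec 8 y) as [Hl19|Hu19].
  { right. apply (GB1p beta y 8 10 1.5555 2.4947 587.76 0.44); [lra|lra|exact (lnlb 8 1.5555 ltac:(lra) ltac:(lra))|exact (lnub (10 + 1) 2 7.3598 2.4947 ltac:(lra) exp2_ge ltac:(lra) ltac:(lra))|exact (explb 8 5 146.94 587.76 exp5_ge ltac:(lra) ltac:(lra) ltac:(lra))|lra|bsolve|lra|lra]. }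
  destruct (Rle_lt_dec 6 y) as [Hl18|Hu18].
  { right. apply (GB1p beta y 6 8 1.4285 2.2229 293.88 0.56); [lra|lra|exact (lnlb 6 1.4285 ltac:(lra) ltac:(lra))|exact (lnub (8 + 1) 2 7.3598 2.2229 ltac:(lra) exp2_ge ltac:(lra) ltac:(lra))|exact (explb 6 5 146.94 293.88 exp5_ge ltac:(lra) ltac:(lra) ltac:(lra))|lra|bsolve|lra|lra]. }
  destruct (Rle_lt_dec 5 y) as [Hl17|Hu17].
  { right. apply (GB1p beta y 5 6 1.3333 1.9512 146.94 0.64); [lra|lra|exact (lnlb 5 1.3333 ltac:(lra) ltac:(lra))|exact (lnub (6 + 1) 2 7.3598 1.9512 ltac:(lra) exp2_ge ltac:(lra) ltac:(lra))|exact (explb 5 5 146.94 146.94 exp5_ge ltac:(lra) ltac:(lra) ltac:(lra))|lra|bsolve|lra|lra]. }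
  destruct (Rle_lt_dec 4 y) as [Hl16|Hu16].
  { right. apply (GB1p beta y 4 5 1.2 1.8153 54.16 0.78); [lra|lra|exact (lnlb 4 1.2 ltac:(lra) ltac:(lra))|exact (lnub (5 + 1) 2 7.3598 1.8153 ltac:(lra) exp2_ge ltac:(lra) ltac:(lra))|exact (explb 4 4 54.165 54.16 exp4_ge ltac:(lra) ltac:(lra) ltac:(lra))|lra|bsolve|lra|lra]. }
  destruct (Rle_lt_dec 3.5 y) as [Hl15|Hu15].
  { right. apply (GB1p beta y 3.5 4 1.1111 1.6794 29.94 0.88); [lra|lra|exact (lnlb 3.5 1.1111 ltac:(lra) ltac:(lra))|exact (lnub (4 + 1) 2 7.3598 1.6794 ltac:(lra) exp2_ge ltac:(lra) ltac:(lra))|exact (explb 3.5 3 19.966 29.94 exp3_ge ltac:(lra) ltac:(lra) ltac:(lra))|lra|bsolve|lra|lra]. }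
  destruct (Rle_lt_dec 3 y) as [Hl14|Hu14].
  { right. apply (GB1p beta y 3 3.5 1 1.6115 19.96 1.03); [lra|lra|exact (lnlb 3 1 ltac:(lra) ltac:(lra))|exact (lnub (3.5 + 1) 2 7.3598 1.6115 ltac:(lra) exp2_ge ltac:(lra) ltac:(lra))|exact (explb 3 3 19.966 19.96 exp3_ge ltac:(lra) ltac:(lra) ltac:(lra))|lra|bsolve|lra|lra]. }
  destruct (Rle_lt_dec 2.7 y) as [Hl13|Hu13].
  { right. apply (GB1p beta y 2.7 3 0.9189 1.4745 12.51 1.16); [lra|lra|exact (lnlb 2.7 0.9189 ltac:(lra) ltac:(lra))|exact (lnub (3 + 1) 1 2.7129 1.4745 ltac:(lra) exp1_ge ltac:(lra) ltac:(lra))|exact (explb 2.7 2 7.3598 12.51 exp2_ge ltac:(lra) ltac:(lra) ltac:(lra))|lra|bsolve|lra|lra]. }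
  destruct (Rle_lt_dec 2.5 y) as [Hl12|Hu12].
  { right. apply (GB1p beta y 2.5 2.7 0.8571 1.3639 11.03 1.23); [lra|lra|exact (lnlb 2.5 0.8571 ltac:(lra) ltac:(lra))|exact (lnub (2.7 + 1) 1 2.7129 1.3639 ltac:(lra) exp1_ge ltac:(lra) ltac:(lra))|exact (explb 2.5 2 7.3598 11.03 exp2_ge ltac:(lra) ltac:(lra) ltac:(lra))|lra|bsolve|lra|lra]. }
  destruct (Rle_lt_dec 2.25 y) as [Hl11|Hu11].
  { right. apply (GB1p beta y 2.25 2.5 0.7692 1.2902 9.19 1.38); [lra|lra|exact (lnlb 2.25 0.7692 ltac:(lra) ltac:(lra))|exact (lnub (2.5 + 1) 1 2.7129 1.2902 ltac:(lra) exp1_ge ltac:(lra) ltac:(lra))|exact (explb 2.25 2 7.3598 9.19 exp2_ge ltac:(lra) ltac:(lra) ltac:(lra))|lra|bsolve|lra|lra]. }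
  destruct (Rle_lt_dec 2 y) as [Hl10|Hu10].
  { left. apply (GA0 beta y 2 2.25 0.6666 1.6); [lra|lra|exact (lnlb 2 0.6666 ltac:(lra) ltac:(lra))|bsolve|lra]. }
  destruct (Rle_lt_dec 1.75 y) as [Hl9|Hu9].
  { left. apply (GA0 beta y 1.75 2 0.5454 1.97); [lra|lra|exact (lnlb 1.75 0.5454 ltac:(lra) ltac:(lra))|bsolve|lra]. }
  destruct (Rle_lt_dec 1.6 y) as [Hl8|Hu8].
  { left. apply (GA0 beta y 1.6 1.75 0.4615 2.07); [lra|lra|exact (lnlb 1.6 0.4615 ltac:(lra) ltac:(lra))|bsolve|lra]. }
  destruct (Rle_lt_dec 1.5 y) as [Hl7|Hu7].
  { left. apply (GA0 beta y 1.5 1.6 0.4 2.07); [lra|lra|exact (lnlb 1.5 0.4 ltac:(lra) ltac:(lra))|bsolve|lra]. }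
  destruct (Rle_lt_dec 1.4 y) as [Hl6|Hu6].
  { left. apply (GA0 beta y 1.4 1.5 0.3333 2.07); [lra|lra|exact (lnlb 1.4 0.3333 ltac:(lra) ltac:(lra))|bsolve|lra]. }
  destruct (Rle_lt_dec 1.3 y) as [Hl5|Hu5].
  { left. apply (GA0 beta y 1.3 1.4 0.2608 2.07); [lra|lra|exact (lnlb 1.3 0.2608 ltac:(lra) ltac:(lra))|bsolve|lra]. }
  destruct (Rle_lt_dec 1.2 y) as [Hl4|Hu4].
  { left. apply (GA0 beta y 1.2 1.3 0.1818 2.15); [lra|lra|exact (lnlb 1.2 0.1818 ltac:(lra) ltac:(lra))|bsolve|lra]. }
  destruct (Rle_lt_dec 1.15 y) as [Hl3|Hu3].
  { left. apply (GA0 beta y 1.15 1.2 0.1395 2.15); [lra|lra|exact (lnlb 1.15 0.1395 ltac:(lra) ltac:(lra))|bsolve|lra]. }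
  destruct (Rle_lt_dec 1.1 y) as [Hl2|Hu2].
  { left. apply (GA0 beta y 1.1 1.15 0.0952 2.22); [lra|lra|exact (lnlb 1.1 0.0952 ltac:(lra) ltac:(lra))|bsolve|lra]. }
  destruct (Rle_lt_dec 1.05 y) as [Hl1|Hu1].
  { left. apply (GA0 beta y 1.05 1.1 0.0487 2.22); [lra|lra|exact (lnlb 1.05 0.0487 ltac:(lra) ltac:(lra))|bsolve|lra]. }
  left. apply (GA0 beta y 1 1.05 0 2.22); [lra|lra|exact (lnlb 1 0 ltac:(lra) ltac:(lra))|bsolve|lra].
Qed.


Theorem lemma9p1 (k p : nat) (hp : (1 <= p)%nat) (hlog : 1 <= iter_ln k (INR p)) :
  exists m : nat, is_fk k p m /\
    Rpower (INR m) (1 / INR p) <= 10 * iter_ln k (INR p).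
Proof.
  exact (main_from_beta beta beta_nonneg beta_max beta_k1 beta_step k p hp hlog).
Qed.
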